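(* Let $(L,\le,(\sqsubseteq_\alpha)_{\alpha<\kappa})$ be a model of Axioms 1–4, where $\kappa>0$ is an arbitrary ordinal. Let $f:L\to L$ be $\alpha$-monotonic for every ordinal $\alpha<\kappa$. Then $f$ has a least pre-fixed point with respect to $\sqsubseteq$, that is, an element $x$ with $f(x)\sqsubseteq x$ such that $x\sqsubseteq z$ whenever $f(z)\sqsubseteq z$. This element is also the least fixed point of $f$ with respect to $\sqsubseteq$.
   Context: Setting (model of Axioms 1–4). Let $(L,\le)$ be a complete lattice with join operation $\bigvee$ and least element $\perp$. Let $\kappa>0$ be an ordinal, and for each ordinal $\alpha<\kappa$ let $\sqsubseteq_\alpha$ be a preorder on $L$. Derived relations: - $x=_\alpha y$ means $x\sqsubseteq_\alpha y$ and $y\sqsubseteq_\alpha x$. - $x\sqsubset_\alpha y$ means $x\sqsubseteq_\alpha y$ and not $x=_\alpha y$. - $\sqsubset=\bigcup_{\alpha<\kappa}\sqsubset_\alpha$. - $x\sqsubseteq y$ means $x\sqsubset y$ or $x=y$. Derived set, for $x\in L$ and $\alpha<\kappa$: $(x]_\alpha=\{y\in L:\forall\beta<\alpha,\ x=_\beta y\}$. For a set $X$, $X\sqsubseteq_\alpha y$ means $x\sqsubseteq_\alpha y$ for all $x\in X$. The structure is a model of Axioms 1–4 if: - (A1) for all $\alpha<\beta<\kappa$, $x\sqsubseteq_\beta y$ implies $x=_\alpha y$; - (A2) $\bigcap_{\alpha<\kappa}=_\alpha$ is the identity relation on $L$; - (A3) for every $x\in L$, every $\alpha<\kappa$ and every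 $X\subseteq(x]_\alpha$ there is $y\in(x]_\alpha$ with $X\sqsubseteq_\alpha y$ such that for all $z\in(x]_\alpha$ with $X\sqsubseteq_\alpha z$ we have $y\sqsubseteq_\alpha z$ and $y\le z$; - (A4) for every nonempty $X\subseteq L$, every $\alpha<\kappa$ and every $y\in L$, if $y=_\alpha x$ for all $x\in X$ then $y=_\alpha\bigvee X$. A function $f:L\to L$ is $\alpha$-monotonic if $x\sqsubseteq_\alpha y$ implies $f(x)\sqsubseteq_\alpha f(y)$. *)

(* Defs.v *)
(* Ordinals below kappa are modelled by an arbitrary
   nonempty well-ordered type (I, lt); complete lattices by a partial order
   with a supremum operator on arbitrary subsets (predicates). *)
From Stdlib Require Import Relations Wellfounded.

Set Implicit Arguments.

Definition complete_lattice (L : Type) (le : L -> L -> Prop)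
  (sup : (L -> Prop) -> L) : Prop :=
  (forall x, le x x) /\
  (forall x y z, le x y -> le y z -> le x z) /\
  (forall x y, le x y -> le y x -> x = y) /\
  (forall (X : L -> Prop) x, X x -> le x (sup X)) /\
  (forall (X : L -> Prop) u, (forall x, X x -> le x u) -> le (sup X) u).

Definition nonempty_wellorder (I : Type) (lt : I -> I -> Prop) : Prop :=
  inhabited I /\
  (forall a, ~ lt a a) /\
  (forall a b c, lt a b -> lt b c -> lt a c) /\
  (forall a b, lt a b \/ a = b \/ lt b a) /\
  well_founded lt.

Section Derived.
Variables (L I : Type) (lt : I -> I -> Prop) (sq : I -> L -> L -> Prop).

Definition eqa (a : I) (x y : L) : Prop := sq a x y /\ sq a y x.
Definition lta (a : I) (x y : L) : Prop := sq a x y /\ ~ eqa a x y.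
Definition sqlt (x y : L) : Prop := exists a, lta a x y.
Definition sqle (x y : L) : Prop := sqlt x y \/ x = y.
Definition downset (x : L) (a : I) : L -> Prop :=
  fun y => forall b, lt b a -> eqa b x y.
Definition set_sqa (a : I) (X : L -> Prop) (y : L) : Prop :=
  forall x, X x -> sq a x y.

End Derived.

Definition model_A1_4 (L : Type) (le : L -> L -> Prop)
  (sup : (L -> Prop) -> L) (I : Type) (lt : I -> I -> Prop)
  (sq : I -> L -> L -> Prop) : Prop :=
  complete_lattice le sup /\
  nonempty_wellorder lt /\
  (forall a x, sq a x x) /\
  (forall a x y z, sq a x y -> sq a y z -> sq a x z) /\
  (forall a b x y, lt a b -> sq b x y -> eqa sq a x y) /\
  (forall x y, (forall a, eqa sq a x y) -> x = y) /\
  (forall x a (X : L -> Prop),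
     (forall z, X z -> downset lt sq x a z) ->
     exists y, downset lt sq x a y /\ set_sqa sq a X y /\
       (forall z, downset lt sq x a z -> set_sqa sq a X z ->
          sq a y z /\ le y z)) /\
  (forall (X : L -> Prop) a y, (exists x, X x) ->
     (forall x, X x -> eqa sq a y x) -> eqa sq a y (sup X)).

Definition mono_a (L I : Type) (sq : I -> L -> L -> Prop) (a : I)
  (f : L -> L) : Prop :=
  forall x y, sq a x y -> sq a (f x) (f y).

(* Main.v *)
Require Import Defs.
From Stdlib Require Import Relations Wellfounded ClassicalEpsilon Classical FunctionalExtensionality.

Lemma tail_sup (L I : Type) (le : L -> L -> Prop) (sup : (L -> Prop) -> L)
  (lt : I -> I -> Prop) (sq : I -> L -> L -> Prop) (x : I -> L) (R : I -> Prop) :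
  complete_lattice le sup ->
  (forall a b, lt a b \/ a = b \/ lt b a) ->
  (forall a u, sq a u u) ->
  (forall (X : L -> Prop) a y, (exists u, X u) ->
     (forall u, X u -> eqa sq a y u) -> eqa sq a y (sup X)) ->
  (forall b c, R b -> R c -> lt c b -> le (x c) (x b)) ->
  (forall b c, R b -> R c -> lt b c -> eqa sq b (x b) (x c)) ->
  forall b, R b -> eqa sq b (x b) (sup (fun u => exists c, R c /\ u = x c)).
Proof.
  intros [Hrefl [Htrans [Hanti [Hub Hlub]]]] Htri Sqr A4 Hle Hco b Rb.
  set (T := fun u => exists c, R c /\ (b = c \/ lt b c) /\ u = x c).
  assert (HT : eqa sq b (x b) (sup T)).
  { apply A4. exists (x b). exists b; auto.
    intros u [c [Rc [[<- | Hbc] ->]]].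
    - split; apply Sqr.
    - apply Hco; auto. }
  assert (Heq : sup T = sup (fun u => exists c, R c /\ u = x c)).
  { apply Hanti.
    - apply Hlub. intros u [c [Rc [_ ->]]]. apply Hub. eauto.
    - apply Hlub. intros u [c [Rc ->]].
      destruct (Htri c b) as [Hcb | [Hcb | Hcb]].
      + apply Htrans with (x b); auto. apply Hub. exists b; auto.
      + subst. apply Hub. exists b; auto.
      + apply Hub. exists c; auto. }
  rewrite <- Heq. exact HT.
Qed.

Theorem mainTheorem2 (L : Type) (le : L -> L -> Prop)
  (sup : (L -> Prop) -> L) (I : Type) (lt : I -> I -> Prop)
  (sq : I -> L -> L -> Prop) (f : L -> L) :
  model_A1_4 le sup lt sq ->
  (forall a, mono_a sq a f) ->
  exists x,
    (sqle sq (f x) x /\ (forall z, sqle sq (f z) z -> sqle sq x z)) /\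
    (f x = x /\ (forall z, f z = z -> sqle sq x z)).
Proof.
  intros HM Hmono.
  pose proof HM as HM'.
  destruct HM as [HCL [HWO [Sqr [Sqt [A1 [A2 [A3 A4]]]]]]].
  pose proof HCL as [Hrefl [Htrans [Hanti [Hub Hlub]]]].
  destruct HWO as [Hinh [Hirr [Hltt [Htri Hwf]]]].
  assert (inhL : inhabited L) by exact (inhabits (sup (fun _ => False))).
  assert (esym : forall a u v, eqa sq a u v -> eqa sq a v u)
    by (intros a u v [H1 H2]; split; auto).
  assert (etr : forall a u v w, eqa sq a u v -> eqa sq a v w -> eqa sq a u w)
    by (intros a u v w [H1 H2] [H3 H4]; split; eauto).
  assert (emono : forall a u v, eqa sq a u v -> eqa sq a (f u) (f v))
    by (intros a u v [H1 H2]; split; apply Hmono; auto).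
  pose (Spec := fun (a : I) (h : forall b, lt b a -> L) (z : L) =>
     ((forall b (p : lt b a), eqa sq b z (h b p)) /\ sq a (f z) z) /\
     forall w, (forall b (p : lt b a), eqa sq b w (h b p)) -> sq a (f w) w ->
        sq a z w /\ le z w).
  pose (F := fun a h => epsilon inhL (Spec a h)).
  pose (x := Fix Hwf (fun _ => L) F).
  assert (Hx : forall a, x a = F a (fun b _ => x b)).
  { intro a. unfold x. apply (Fix_eq Hwf (fun _ => L) F). intros a' h1 h2 Heq.
    assert (h1 = h2) as ->; [|reflexivity].
    apply functional_extensionality_dep; intro b;
    apply functional_extensionality_dep; intro p; apply Heq. }
  pose (D := fun a w => forall b, lt b a -> eqa sq b w (x b)).
  assert (HS : forall a, ((D a (x a) /\ sq a (f (x a)) (x a)) /\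
      forall w, D a w -> sq a (f w) w -> sq a (x a) w /\ le (x a) w)
      /\ eqa sq a (f (x a)) (x a)).
  { apply (well_founded_ind Hwf). intros a IH.
    assert (Hpres : forall w, D a w -> D a (f w)).
    { intros w Hw b Hb. apply etr with (f (x b)).
      - apply emono; auto.
      - apply IH; auto. }
    assert (Hsp : (D a (x a) /\ sq a (f (x a)) (x a)) /\
      forall w, D a w -> sq a (f w) w -> sq a (x a) w /\ le (x a) w).
    { rewrite Hx. unfold F. apply (epsilon_spec inhL (Spec a (fun b _ => x b))).
      pose (y := sup (fun u => exists c, lt c a /\ u = x c)).
      assert (Hy : D a y).
      { intros b Hb. apply esym.
        apply (@tail_sup L I le sup lt sq x (fun c => lt c a) HCL Htri Sqr A4).
        - intros b' c Rb Rc Hcb. apply (proj2 (proj1 (IH c Rc))).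
          + intros d Hd. apply (proj1 (proj1 (proj1 (IH b' Rb)))). eauto.
          + apply (proj1 (A1 c b' _ _ Hcb (proj2 (proj1 (proj1 (IH b' Rb)))))).
        - intros b' c Rb Rc Hbc. apply esym. apply (proj1 (proj1 (proj1 (IH c Rc)))); auto.
        - auto. }
      pose (Lb := fun u => D a u /\ forall w, D a w -> sq a (f w) w -> sq a u w).
      destruct (A3 y a Lb) as [z0 [Hz0 [Hz0ub Hz0l]]].
      { intros z [Dz _] b Hb. apply etr with (x b); auto. }
      assert (Dz0 : D a z0).
      { intros b Hb. apply etr with y; [apply esym; apply Hz0; auto | auto]. }
      assert (Hl : forall w, D a w -> sq a (f w) w -> sq a z0 w /\ le z0 w).
      { intros w Dw Hw. apply Hz0l.
        - intros b Hb. apply etr with (x b); auto.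
        - intros u [_ Hu]. auto. }
      exists z0. split; [split|].
      - exact Dz0.
      - apply Hz0ub. split.
        + apply Hpres; auto.
        + intros w Dw Hw. apply Sqt with (f w); auto.
          apply Hmono. apply Hl; auto.
      - exact Hl. }
    split; [exact Hsp|].
    destruct Hsp as [[Da Hfa] Hl]. split; auto.
    apply Hl.
    - apply Hpres; auto.
    - apply Hmono; auto. }
  pose (X := sup (fun u => exists c, True /\ u = x c)).
  assert (HX : forall b, eqa sq b X (x b)).
  { intro b. apply esym.
    apply (@tail_sup L I le sup lt sq x (fun _ => True) HCL Htri Sqr A4).
    - intros b' c _ _ Hcb. apply (proj2 (proj1 (HS c))).
      + intros d Hd. apply (proj1 (proj1 (proj1 (HS b')))). eauto.
      + apply (proj1 (A1 c b' _ _ Hcb (proj2 (proj1 (proj1 (HS b')))))).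
    - intros b' c _ _ Hbc. apply esym. apply (proj1 (proj1 (proj1 (HS c)))); auto.
    - auto. }
  assert (Hfix : f X = X).
  { apply A2. intro a. apply etr with (f (x a)); [apply emono; auto|].
    apply etr with (x a); [apply HS | apply esym; auto]. }
  assert (Hleast : forall z, sqle sq (f z) z -> sqle sq X z).
  { intros z Hz.
    destruct (classic (X = z)) as [Heq | Hne]; [right; exact Heq|].
    assert (Hex : exists a, ~ eqa sq a X z).
    { apply not_all_ex_not. intro H. apply Hne. apply A2. exact H. }
    destruct Hex as [a0 Ha0]. revert Ha0. pattern a0.
    apply (well_founded_ind Hwf). clear a0. intros a IH Hna.
    destruct (classic (exists b, lt b a /\ ~ eqa sq b X z)) as [[b [Hb Hnb]] | Hno].
    { apply (IH b); auto. }
    assert (Hall : forall b, lt b a -> eqa sq b X z).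
    { intros b Hb. apply NNPP. intro H. apply Hno. eauto. }
    assert (Dz : D a z).
    { intros b Hb. apply etr with X; [apply esym; auto | auto]. }
    assert (Hfz : sq a (f z) z).
    { destruct Hz as [[d [Hd Hnd]] | Heq].
      - destruct (Htri d a) as [Hda | [Hda | Hda]].
        + exfalso. apply Hnd.
          assert (E1 : eqa sq d z (x d)) by (apply Dz; auto).
          apply etr with (f (x d)); [apply emono; auto|].
          apply etr with (x d); [apply HS | apply esym; auto].
        + subst; auto.
        + apply (A1 a d _ _ Hda Hd).
      - rewrite Heq. apply Sqr. }
    destruct (proj2 (proj1 (HS a)) z Dz Hfz) as [Hxz _].
    left. exists a. split; auto.
    apply Sqt with (x a); auto. apply (HX a). }
  exists X. split; split; auto.
  - right; exact Hfix.
  - intros z Hz. apply Hleast. right. rewrite Hz. reflexivity.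
Qed.
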